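(* Let $n_1,n_2$ be nonnegative integers, and consider the walks of minimal length from $(0,0)$ to $(n_1,n_2)$ that stay in the first quadrant and use steps from $\{E,W,NE,SW\}$; let $s(n_1,n_2)$ be the number of such shortest walks. (i) If $n_1\ge n_2$, then every shortest walk uses only $E$ and $NE$ steps, the shortest length is $n_1$, and $F(n_1;\,n_1,n_2)=s(n_1,n_2)=\binom{n_1}{n_2}$. (ii) If $n_1\le n_2$, then every shortest walk uses only $W$ and $NE$ steps, the shortest length is $2n_2-n_1$, and $F(2n_2-n_1;\,n_1,n_2)=s(n_1,n_2)=\frac{n_1+1}{2n_2-n_1+1}\binom{2n_2-n_1+1}{n_2+1}$.
   Context: Steps are $E=(1,0)$, $W=(-1,0)$, $NE=(1,1)$, $SW=(-1,-1)$. $F(m;\,n_1,n_2)$ denotes the number of lattice walks from $(0,0)$ to $(n_1,n_2)$ that always stay in the first quadrant $\{(a,b): a\ge 0,\ b\ge 0\}$ and have exactly $m$ steps, each belonging to $\{E,W,NE,SW\}$. *)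

(* Defs.v *)
From HB Require Import structures.
From mathcomp Require Import all_boot all_order all_algebra.
Set Implicit Arguments. Unset Strict Implicit. Unset Printing Implicit Defensive.
Import GRing.Theory Num.Theory.
Local Open Scope ring_scope.

Inductive step := E | W | NE | SW.

Definition step_to (s : step) : 'I_4 :=
  match s with E => inord 0 | W => inord 1 | NE => inord 2 | SW => inord 3 end.
Definition step_of (i : 'I_4) : step :=
  match val i with 0 => E | 1 => W | 2 => NE | _ => SW end.
Lemma step_toK : cancel step_to step_of.
Proof. by case; rewrite /step_of /= inordK. Qed.
HB.instance Definition _ := Finite.copy step (can_type step_toK).

Definition delta (s : step) : int * int :=
  match s with
  | E => (1, 0) | W => (-1, 0)
  | NE => (1, 1) | SW => (-1, -1)
  end.

Definition endpt (ws : seq step) : int * int :=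
  foldl (fun p s => ((p.1 + (delta s).1)%R, (p.2 + (delta s).2)%R)) ((0:int), (0:int)) ws.

Definition in_quadrant (ws : seq step) : bool :=
  all (fun k => (0 <= (endpt (take k ws)).1)%R && (0 <= (endpt (take k ws)).2)%R)
      (iota 0 (size ws).+1).

Definition qwalk (m n1 n2 : nat) (w : m.-tuple step) : bool :=
  in_quadrant w && (endpt w == (n1%:Z, n2%:Z)).

Definition F (m n1 n2 : nat) : nat := #|[pred w : m.-tuple step | qwalk n1 n2 w]|%N.

(* L is the minimal length of a quadrant walk from (0,0) to (n1,n2);
   the number of shortest walks s(n1,n2) is then F L n1 n2. *)
Definition is_shortest_length (L n1 n2 : nat) : Prop :=
  (0 < F L n1 n2)%N /\ forall m, (m < L)%N -> F m n1 n2 = 0.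

(* Main.v *)
Require Import Defs.
From mathcomp Require Import all_boot all_order all_algebra.
From mathcomp Require Import zify.
Import Order.TTheory GRing.Theory Num.Theory.

Definition sfn (p : int * int) (s : step) : int * int :=
  ((p.1 + (delta s).1)%R, (p.2 + (delta s).2)%R).
Definition endfrom (p : int * int) (ws : seq step) := foldl sfn p ws.
Definition qfrom (p : int * int) (ws : seq step) : bool :=
  all (fun k => (0 <= (endfrom p (take k ws)).1)%R && (0 <= (endfrom p (take k ws)).2)%R)
      (iota 0 (size ws).+1).
Definition Gc m p t := #|[pred w : m.-tuple step | qfrom p w && (endfrom p w == t)]|.

Lemma F_Gc m n1 n2 : F m n1 n2 = Gc m (0%R, 0%R) (Posz n1, Posz n2).
Proof. by []. Qed.

Lemma qfrom_nil p : qfrom p [::] = (0 <= p.1)%R && (0 <= p.2)%R.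
Proof. by rewrite /qfrom /= andbT. Qed.

Lemma iotaS1 m n : iota m.+1 n = map succn (iota m n).
Proof. by elim: n m => // n IH m /=; rewrite IH. Qed.

Lemma qfrom_cons p s ws :
  qfrom p (s :: ws) = [&& (0 <= p.1)%R, (0 <= p.2)%R & qfrom (sfn p s) ws].
Proof.
rewrite /qfrom (_ : iota 0 (size (s::ws)).+1 = 0 :: iota 1 (size ws).+1) //.
rewrite iotaS1 /= all_map -andbA; congr (_ && (_ && _)).
Qed.

Lemma endfrom_cons p s ws : endfrom p (s :: ws) = endfrom (sfn p s) ws.
Proof. by []. Qed.

Lemma card_sum (T : finType) (P : pred T) : #|[pred x | P x]| = \sum_x (P x : nat).
Proof. by rewrite -sum1_card big_mkcond. Qed.

Lemma Gc0 p t : Gc 0 p t = [&& (0 <= p.1)%R, (0 <= p.2)%R & (p == t)].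
Proof.
rewrite /Gc card_sum (eq_bigr (fun _ => (qfrom p [::] && (endfrom p [::] == t) : nat))).
  by rewrite big_const card_tuple expn0 /= addn0 qfrom_nil /endfrom /= andbA.
by move=> w _; rewrite tuple0.
Qed.

Lemma GcS m p t : Gc m.+1 p t =
  if (0 <= p.1)%R && (0 <= p.2)%R then \sum_s Gc m (sfn p s) t else 0.
Proof.
rewrite /Gc card_sum (reindex (fun st : step * m.-tuple step => [tuple of st.1 :: st.2])) /=.
  rewrite -(pair_bigA _ (fun s (w : m.-tuple step) => (qfrom p (s :: w) && (endfrom (sfn p s) w == t) : nat))) /=.
  case: ifP => H.
    apply: eq_bigr => s _; rewrite card_sum; apply: eq_bigr => w _.
    by rewrite qfrom_cons andbA H.
  rewrite big1 // => s _; rewrite big1 // => w _.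
  by rewrite qfrom_cons andbA H.
exists (fun w : m.+1.-tuple step => (thead w, [tuple of behead w])).
  case=> s w _ /=; congr (_, _); exact: val_inj.
by move=> w _ /=; rewrite [in RHS](tuple_eta w).
Qed.

Local Open Scope ring_scope.

Lemma endfrom_bounds ws (a b : int) :
  let q := endfrom (a, b) ws in
  [/\ q.1 - a <= Posz (size ws), a - q.1 <= Posz (size ws),
      2 * (q.2 - b) - (q.1 - a) <= Posz (size ws)
    & (q.1 - a) - 2 * (q.2 - b) <= Posz (size ws)].
Proof.
elim: ws a b => [|s ws IH] a b /=.
  by rewrite /endfrom /=; split; lia.
have := IH ((sfn (a,b) s).1) ((sfn (a,b) s).2).
rewrite -surjective_pairing.
case: (endfrom _ ws) => q1 q2 /=.
by case: s; rewrite /= => -[] *; split; lia.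
Qed.

Lemma all_ENE ws (a b : int) :
  (endfrom (a, b) ws).1 - a = Posz (size ws) -> all (fun s => (s == E) || (s == NE)) ws.
Proof.
elim: ws a b => [|s ws IH] a b //=.
have := endfrom_bounds ws (sfn (a,b) s).1 (sfn (a,b) s).2.
have := IH (sfn (a,b) s).1 (sfn (a,b) s).2.
rewrite -surjective_pairing /=.
case: (endfrom _ ws) => q1 q2 /=.
by case: s => /= H [] *; rewrite ?eqxx ?orbT /=; (apply: H; lia) || (exfalso; lia).
Qed.

Lemma all_WNE ws (a b : int) :
  2 * ((endfrom (a, b) ws).2 - b) - ((endfrom (a, b) ws).1 - a) = Posz (size ws) ->
  all (fun s => (s == W) || (s == NE)) ws.
Proof.
elim: ws a b => [|s ws IH] a b //=.
have := endfrom_bounds ws (sfn (a,b) s).1 (sfn (a,b) s).2.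
have := IH (sfn (a,b) s).1 (sfn (a,b) s).2.
rewrite -surjective_pairing /=.
case: (endfrom _ ws) => q1 q2 /=.
by case: s => /= H [] *; rewrite ?eqxx ?orbT /=; (apply: H; lia) || (exfalso; lia).
Qed.

Lemma Gc_zero m (a b tx ty : int) :
  (Posz m < tx - a) \/ (Posz m < a - tx) \/ (Posz m < 2 * (ty - b) - (tx - a))
  \/ (Posz m < (tx - a) - 2 * (ty - b)) -> Gc m (a, b) (tx, ty) = 0%N.
Proof.
move=> Hm; rewrite /Gc card_sum big1 // => w _.
case E: (endfrom (a, b) w == (tx, ty)); last by rewrite andbF.
move/eqP: E => E; have := endfrom_bounds w a b; rewrite E size_tuple /= => -[]; lia.
Qed.

Lemma Gc_neg m (a b : int) t : a < 0 -> Gc m (a, b) t = 0%N.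
Proof.
move=> Ha; case: m => [|m]; first by rewrite Gc0 /= leNgt Ha.
by rewrite GcS /= leNgt Ha.
Qed.

Lemma Gc_i m : forall (x y k : nat) (a b tx ty : int), a = Posz x -> b = Posz y ->
  tx = Posz (x + m)%N -> ty = Posz (y + k)%N -> Gc m (a, b) (tx, ty) = 'C(m, k).
Proof.
elim: m => [|m IH] x y k a b tx ty -> -> -> ->.
  rewrite Gc0 /= bin0n addn0.
  case: k => [|k]; first by rewrite addn0 eqxx.
  by rewrite xpair_eqE eqxx /=; case: eqP => // H; exfalso; lia.
rewrite GcS /=.
rewrite (bigD1 E) // (bigD1 NE) /=; last by apply/eqP.
rewrite [X in (_ + (_ + X))%N]big1 ?addn0; last first.
  by move=> s /andP[]; case: s => /eqP H1 /eqP H2; try (by case: H1); try (by case: H2); apply: Gc_zero => /=; lia.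
rewrite /sfn; cbn [fst snd delta].
rewrite (IH x.+1 y k); [|lia..].
case: k => [|k].
  by rewrite Gc_zero ?bin0 ?addn0 //; lia.
by rewrite (IH x.+1 y.+1 k) ?binS 1?addnC //; lia.
Qed.

Lemma Gc_ii m : forall (x y a w n1 : nat) (px py tx ty : int),
  (a + w = m)%N -> (n1 + w = x + a)%N -> px = Posz x -> py = Posz y -> tx = Posz n1 ->
  ty = Posz (y + a)%N -> (Gc m (px, py) (tx, ty) + 'C(m, a + x + 1) = 'C(m, a))%N.
Proof.
elim: m => [|m IH] x y a w n1 px py tx ty Hm Hn -> -> -> ->.
  have [Ha Hw] : a = 0%N /\ w = 0%N by lia.
  subst a w; have -> : n1 = x by lia.
  by rewrite Gc0 /= !addn0 eqxx add0n addn1 bin0n.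
rewrite GcS /=.
rewrite (bigD1 NE) // (bigD1 W) /=; last by apply/eqP.
rewrite [X in (_ + (_ + X))%N]big1 ?addn0; last first.
  by move=> s /andP[]; case: s => /eqP H1 /eqP H2; try (by case: H1); try (by case: H2); apply: Gc_zero => /=; lia.
rewrite /sfn; cbn [fst snd delta].
case: a Hm Hn => [|a] Hm Hn.
  rewrite (Gc_zero m); last by lia.
  case: x Hn => [|x] Hn; first by exfalso; lia.
  set G := Gc m _ _.
  have H2 : (G + 'C(m, 0 + x + 1))%N = 'C(m, 0) by apply: (IH x y 0%N m n1); lia.
  clearbody G.
  rewrite ?add0n ?addn0 ?addn1 ?addSn ?addnS in H2 *.
  have Hs : 'C(m, x.+2) = 0%N by apply: bin_small; lia.
  rewrite binS Hs bin0; rewrite bin0 in H2.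
  lia.
have H1 : (Gc m ((x%:Z + 1)%R, (y%:Z + 1)%R) (n1%:Z, (y + a.+1)%N%:Z) + 'C(m, a + x.+1 + 1))%N
   = 'C(m, a) by apply: (IH x.+1 y.+1 a w n1); lia.
set G1 := Gc m ((x%:Z + 1)%R, _) _ in H1 *; clearbody G1.
case: w Hm Hn => [|w] Hm Hn.
  rewrite (Gc_zero m ((x%:Z - 1)%R)); last by lia.
  have ? : a = m by lia.
  subst a.
  rewrite ?add0n ?addn0 ?addn1 ?addSn ?addnS in H1 *.
  rewrite binn bin_small in H1; last by lia.
  rewrite binn bin_small; last by lia.
  lia.
case: x Hn H1 => [|x] Hn H1.
  rewrite (Gc_neg m); last by lia.
  rewrite ?add0n ?addn0 ?addn1 ?addSn ?addnS in H1 *.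
  rewrite binS [X in (_ = X)]binS.
  lia.
set G2 := Gc m _ _.
have H2 : (G2 + 'C(m, a.+1 + x + 1))%N = 'C(m, a.+1) by apply: (IH x y a.+1 w n1); lia.
clearbody G2.
rewrite ?add0n ?addn0 ?addn1 ?addSn ?addnS in H1 H2 *.
rewrite binS [X in (_ = X)]binS.
lia.
Qed.

Close Scope ring_scope.

Theorem theorem2 (n1 n2 : nat) :
  ((n2 <= n1)%N ->
     [/\ is_shortest_length n1 n1 n2,
         (forall w : n1.-tuple step, qwalk n1 n2 w ->
            all (fun s => (s == E) || (s == NE)) w)
       & F n1 n1 n2 = 'C(n1, n2)]) /\
  ((n1 <= n2)%N ->
     [/\ is_shortest_length (2 * n2 - n1) n1 n2,
         (forall w : (2 * n2 - n1).-tuple step, qwalk n1 n2 w ->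
            all (fun s => (s == W) || (s == NE)) w)
       & ((F (2 * n2 - n1) n1 n2)%:R : rat)%R =
           ((n1.+1)%:R / ((2 * n2 - n1).+1)%:R * ('C((2 * n2 - n1).+1, n2.+1))%:R
             : rat)%R]).
Proof.
split=> H.
  have Fc : F n1 n1 n2 = 'C(n1, n2).
    by rewrite F_Gc; apply: (Gc_i n1 0 0 n2).
  split.
  - split; first by rewrite Fc bin_gt0.
    by move=> m Hm; rewrite F_Gc; apply: Gc_zero; lia.
  - move=> w /andP[_ /eqP He]; apply: (@all_ENE _ 0%R 0%R).
    change (endfrom (0%R, 0%R) w) with (endpt w); rewrite He size_tuple /=; lia.
  - exact: Fc.
set m := (2 * n2 - n1)%N.
have Hc : (F m n1 n2 + 'C(m, n2.+1) = 'C(m, n2))%N.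
  rewrite F_Gc -[n2.+1](addn1 n2) -[X in 'C(m, X + 1)](addn0 n2).
  by apply: (Gc_ii m 0 0 n2 (n2 - n1) n1); rewrite /m; lia.
have L := mul_bin_left m n2.
have D := mul_bin_diag m.+1 n2.
have K : (n2.+1 * F m n1 n2 = n1.+1 * 'C(m, n2))%N.
  have Hmn : (m - n2 = n2 - n1)%N by rewrite /m; lia.
  rewrite Hmn in L; nia.
have Hid : (m.+1 * F m n1 n2 = n1.+1 * 'C(m.+1, n2.+1))%N.
  apply/eqP; rewrite -(eqn_pmul2l (ltn0Sn n2)); apply/eqP.
  rewrite mulnCA K /= in D *; nia.
split.
- split.
    have : (0 < m.+1 * F m n1 n2)%N.
      by rewrite Hid muln_gt0 bin_gt0 /m; apply/andP; split => //; lia.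
    by rewrite muln_gt0 => /andP[].
  by move=> m' Hm'; rewrite F_Gc; apply: Gc_zero; rewrite /m in Hm'; lia.
- move=> w /andP[_ /eqP He]; apply: (@all_WNE _ 0%R 0%R).
  change (endfrom (0%R, 0%R) w) with (endpt w); rewrite He size_tuple /=; lia.
- rewrite -/m mulrAC -natrM -Hid natrM mulrC mulKf //.
  by rewrite pnatr_eq0.
Qed.
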